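(* Let $R=K[X_1,\dots,X_d]$ be a polynomial ring over a field $K$ and $f$ a nonzero polynomial in $R$. Then the descending chain of ideals $R\supseteq\sqrt{J_f}\supseteq\sqrt{J_{f^2}}\supseteq\cdots$ eventually stabilizes.
   Context: For a nonzero polynomial $g=\sum_{\mathbf{n}\in\mathbb{N}^d}a_{\mathbf{n}}X_1^{n_1}\cdots X_d^{n_d}\in R$ (with $a_{\mathbf{n}}\in K$), $J_g$ denotes the monomial ideal generated by the monomials $X_1^{n_1}\cdots X_d^{n_d}$ with $a_{\mathbf{n}}\ne0$. *)

(* Defs.v *)
From HB Require Import structures.
From mathcomp Require Import all_boot all_algebra.
From mathcomp Require Import mpoly.
Set Implicit Arguments. Unset Strict Implicit. Unset Printing Implicit Defensive.
Import GRing.Theory.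
Local Open Scope ring_scope.

(* Membership in the monomial ideal J_g of R = K[X_1..X_d]: the ideal generated
   by the monomials X^m with m in the support of g (coefficient of X^m in g nonzero). *)
Definition in_Jmon (K : fieldType) (d : nat) (g p : {mpoly K[d]}) : Prop :=
  exists c : 'X_{1..d} -> {mpoly K[d]},
    p = \sum_(m <- msupp g) c m * 'X_[m].

Definition in_rad (K : fieldType) (d : nat) (I : {mpoly K[d]} -> Prop)
  (p : {mpoly K[d]}) : Prop := exists k : nat, I (p ^+ k).

(* Main.v *)
Require Import Defs.
From HB Require Import structures.
From mathcomp Require Import all_boot all_algebra.
From mathcomp Require Import mpoly.
Set Implicit Arguments. Unset Strict Implicit. Unset Printing Implicit Defensive.
Import GRing.Theory.

Local Open Scope ring_scope.

Section Phi.
Variables (K : fieldType) (d : nat) (m : 'X_{1..d}).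
Definition hT (i : 'I_d) : {mpoly K[d]} := if m i == 0%N then 0 else 'X_i.
Definition phi (p : {mpoly K[d]}) : {mpoly K[d]} := mmap (@mpolyC d K) hT p.
Definition good (a : 'X_{1..d}) := [forall i, (m i == 0%N) ==> (a i == 0%N)].

Lemma mmap1_good a : good a -> mmap1 hT a = 'X_[a].
Proof.
move=> /forallP ga; rewrite -mmap1_id; apply: eq_bigr => i _.
rewrite /hT; case: eqP => // mi0.
by move: (ga i); rewrite mi0 eqxx /= => /eqP ->; rewrite !expr0.
Qed.

Lemma mmap1_bad a : ~~ good a -> mmap1 hT a = 0.
Proof.
move=> /forallPn [i]; rewrite negb_imply => /andP [mi ai].
rewrite /mmap1 (bigD1 i) //= /hT mi expr0n (negbTE ai) mul0r //.
Qed.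

Lemma phi_mul p q : phi (p * q) = phi p * phi q.
Proof. exact: (mmap_is_multiplicative hT (@mpolyC d K)).1. Qed.

Lemma phi_exp p k : phi (p ^+ k) = phi p ^+ k.
Proof.
elim: k => [|k IH]; first by rewrite !expr0 /phi -[1]/(1%:MP) mmapC.
by rewrite !exprS phi_mul IH.
Qed.

Lemma phi_coef p : good m -> (phi p)@_m = p@_m.
Proof.
move=> gm; rewrite {2}(mpolyE p) /phi /mmap !raddf_sum /=.
apply: eq_bigr => a _.
rewrite mcoeffCM mcoeffZ; case: (boolP (good a)) => ga.
  by rewrite mmap1_good.
rewrite mmap1_bad // mcoeff0 mcoeffX; case: eqP => [ea|]; last by rewrite mulr0.
by move: ga; rewrite ea gm.
Qed.

Lemma phi_nz q : phi q != 0 -> exists2 b, b \in msupp q & good b.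
Proof.
move=> nz; case: (boolP (has good (msupp q))) => [/hasP [b] hb gb|/hasPn H].
  by exists b.
move: nz; rewrite /phi /mmap big1_seq ?eqxx // => a /andP [_ /H ga].
by rewrite mmap1_bad // mulr0.
Qed.

Lemma key n (f : {mpoly K[d]}) : m \in msupp f ->
  exists2 b, b \in msupp (f ^+ n) & good b.
Proof.
move=> hm; apply: phi_nz; rewrite phi_exp expf_neq0 //.
apply/negP => /eqP h0; have gm : good m by apply/forallP => i; apply/implyP.
by move: hm; rewrite mcoeff_msupp -(phi_coef f gm) h0 mcoeff0 eqxx.
Qed.

Lemma good_le b : good b -> (b <= m *+ mdeg b)%MM.
Proof.
move=> /forallP gb; apply/mnm_lepP => i; rewrite mulmnE.
case: (eqVneq (m i) 0%N) => mi.
  by move: (gb i); rewrite mi eqxx /= => /eqP ->.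
apply: (leq_trans (n := mdeg b)); last by rewrite leq_pmull // lt0n.
by rewrite mdegE (bigD1 i) //= leq_addr.
Qed.
End Phi.

Section Ideal.
Variables (K : fieldType) (d : nat).
Implicit Types (g p q r : {mpoly K[d]}).

Lemma J0 g : in_Jmon g 0.
Proof. by exists (fun _ => 0); rewrite big1 // => i _; rewrite mul0r. Qed.

Lemma JD g p q : in_Jmon g p -> in_Jmon g q -> in_Jmon g (p + q).
Proof.
move=> [c1 ->] [c2 ->]; exists (fun m => c1 m + c2 m).
by rewrite -big_split; apply: eq_bigr => i _; rewrite mulrDl.
Qed.

Lemma JM g r p : in_Jmon g p -> in_Jmon g (r * p).
Proof.
move=> [c ->]; exists (fun m => r * c m).
by rewrite mulr_sumr; apply: eq_bigr => i _; rewrite mulrA.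
Qed.

Lemma JX g b : b \in msupp g -> in_Jmon g 'X_[b].
Proof.
move=> hb; exists (fun m => if m == b then 1 else 0).
rewrite (bigD1_seq b) ?msupp_uniq //= eqxx mul1r big1 ?addr0 // => i /negbTE ->.
by rewrite mul0r.
Qed.

Lemma Jsum g (s : seq 'X_{1..d}) (F : 'X_{1..d} -> {mpoly K[d]}) :
  (forall x, x \in s -> in_Jmon g (F x)) -> in_Jmon g (\sum_(x <- s) F x).
Proof.
move=> H; rewrite big_seq; apply: (big_ind (fun x => in_Jmon g x)).
- exact: J0.
- exact: JD.
- exact: H.
Qed.

Lemma JsuppM f q p : in_Jmon (f * q) p -> in_Jmon f p.
Proof.
move=> [c ->]; apply: Jsum => x hx; apply: JM.
have := msuppM_le hx => /allpairsP [[m1 m2] /= [h1 h2 ->]].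
by rewrite addmC mpolyXD; apply: JM; apply: JX.
Qed.

Variable I : {mpoly K[d]} -> Prop.
Hypotheses (I0 : I 0) (ID : forall p q, I p -> I q -> I (p + q))
  (IM : forall r p, I p -> I (r * p)).

Lemma Ipow p k j : (k <= j)%N -> I (p ^+ k) -> I (p ^+ j).
Proof. by move=> kj hk; rewrite -(subnK kj) exprD; apply: IM. Qed.

Lemma IMn p c : I p -> I (p *+ c).
Proof. by move=> h; rewrite -mulr_natl; apply: IM. Qed.

Lemma rad0 : in_rad I 0.
Proof. by exists 1%N; rewrite expr1. Qed.

Lemma radM r p : in_rad I p -> in_rad I (r * p).
Proof. by move=> [k hk]; exists k; rewrite exprMn; apply: IM. Qed.


Lemma radD' p q : in_rad I p -> in_rad I q -> in_rad I (p + q).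
Proof.
move=> [k hk] [l hl]; exists (k + l)%N; rewrite exprDn.
rewrite big_seq; apply: (big_ind (fun x => I x)) => //.
move=> i _; apply: IMn; case: (leqP l i) => hi.
  by apply: IM; apply: Ipow hl.
rewrite mulrC; apply: IM; apply: Ipow hk; rewrite leq_subRL //; last first.
  by rewrite -ltnS (leq_trans (ltn_ord i)) // ltnS.
by rewrite addnC leq_add2l ltnW.
Qed.

Lemma radsum (s : seq 'X_{1..d}) (F : 'X_{1..d} -> {mpoly K[d]}) :
  (forall x, x \in s -> in_rad I (F x)) -> in_rad I (\sum_(x <- s) F x).
Proof.
move=> H; rewrite big_seq; apply: (big_ind (fun x => in_rad I x)).
- exact: rad0.
- exact: radD'.
- exact: H.
Qed.
End Ideal.

Lemma dir2 (K : fieldType) (d : nat) (f p : {mpoly K[d]}) n :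
  in_rad (in_Jmon f) p -> in_rad (in_Jmon (f ^+ n)) p.
Proof.
move=> [k [c hk]].
have : in_rad (in_Jmon (f ^+ n)) (p ^+ k).
  rewrite hk; apply: radsum; [exact: J0 | exact: JD | exact: JM | ].
  move=> m hm; apply: radM; [exact: JM |].
  have [b hb gb] := key n hm.
  exists (mdeg b); rewrite mpolyXn -(submK (good_le gb)) mpolyXD.
  by apply: JM; apply: JX.
by move=> [j hj]; exists (k * j)%N; rewrite exprM.
Qed.

Unset Implicit Arguments.
Set Strict Implicit.

Theorem lemma6p2 (K : fieldType) (d : nat) (f : {mpoly K[d]}) (hf : f != 0) :
  exists N : nat, (0 < N)%N /\ forall n : nat, (N <= n)%N ->
    forall p : {mpoly K[d]},
      in_rad (in_Jmon (f ^+ n)) p <-> in_rad (in_Jmon (f ^+ N)) p.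
Proof.
exists 1%N; split => // n hn p; rewrite expr1; split; last exact: dir2.
move=> [k hk]; exists k; move: hk; rewrite -(prednK hn) exprS.
exact: JsuppM.
Qed.
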